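(* Let $p,q\ge1$ be relatively prime integers, $p=p_1^2+p_2^2+p_3^2+p_4^2$ with integers $p_j\ge 0$, and let $a,b,\gamma$ be integers such that $\Delta=r_1r_4-r_2r_3$ is relatively prime to $q$, where $r_1=-p_1-2\gamma p_3+bp_4$, $r_2=p_2+2ap_4-bp_3$, $r_3=p_3-2\gamma p_1+bp_2$, $r_4=-p_4+2ap_2-bp_1$. Let $\varphi(n,m)=e\big(\tfrac1q(an^2+bnm+\gamma m^2)\big)$. For integers $k,\ell$ set $M=p_2k+p_4\ell$, $N=-p_1k-p_3\ell$, $M'=-p_4k+p_2\ell$, $N'=p_3k-p_1\ell$, and $$S(k,\ell)=\sum_{n,m=0}^{q-1} e\Big(\tfrac{nM'+mN'}{q}\Big)\,\overline{\varphi(n,m)}\,\varphi(n+M,m+N).$$ Then $S(k,\ell)=q^2$ if $q\mid k$ and $q\mid \ell$, and $S(k,\ell)=0$ otherwise.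
   Context: $e(t):=e^{2\pi i t}$. *)

(* Defs.v *)
From HB Require Import structures.
From mathcomp Require Import all_boot all_order all_algebra.
From mathcomp Require Import all_classical all_reals all_analysis.
From mathcomp Require Import complex.
Set Implicit Arguments. Unset Strict Implicit. Unset Printing Implicit Defensive.
Import Order.TTheory GRing.Theory Num.Theory.
Local Open Scope ring_scope.
Local Open Scope complex_scope.

Definition e (R : realType) (t : R) : R[i] :=
  (cos (2 * pi * t)) +i* (sin (2 * pi * t)).

Definition phi (R : realType) (q : nat) (a b g : int) (n m : int) : R[i] :=
  e ((a * n ^+ 2 + b * n * m + g * m ^+ 2)%:~R / q%:R).

Definition Ssum (R : realType) (q : nat) (a b g p1 p2 p3 p4 : int) (k l : int) : R[i] :=
  let M := p2 * k + p4 * l in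
  let N := - p1 * k - p3 * l in
  let M' := - p4 * k + p2 * l in
  let N' := p3 * k - p1 * l in
  \sum_(n < q) \sum_(m < q)
     e ((n%:Z * M' + m%:Z * N')%:~R / q%:R)
     * conjc (phi R q a b g n m)
     * phi R q a b g (n%:Z + M) (m%:Z + N).

(* Main.v *)
Require Import Defs.
From HB Require Import structures.
From mathcomp Require Import all_boot all_order all_algebra.
From mathcomp Require Import all_classical all_reals all_analysis.
From mathcomp Require Import complex.
From mathcomp Require Import ring lra.
Import Order.TTheory GRing.Theory Num.Theory.
Local Open Scope ring_scope.
Local Open Scope complex_scope.

Section E.
Variable R : realType.

Lemma eD (x y : R) : e (x + y) = e x * e y.
Proof.
rewrite /e mulrDr cosD sinD; simpc.
by congr (_ +i* _); rewrite addrC.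
Qed.

Lemma eN (x : R) : conjc (e x) = e (- x).
Proof. by rewrite /e mulrN cosN sinN. Qed.

Lemma e0 : e (0 : R) = 1.
Proof. by rewrite /e mulr0 cos0 sin0. Qed.

Lemma e_nat (n : nat) : e (n%:R : R) = 1.
Proof.
elim: n => [|n IH]; first by rewrite e0.
rewrite -addn1 natrD eD IH mul1r /e mulr1 mulr_natl cos2pi sin2pi //.
Qed.

Lemma e_int (z : int) : e (z%:~R : R) = 1.
Proof.
case: z => n; first by rewrite e_nat.
by rewrite NegzE intrN -eN e_nat conjc1.
Qed.

Lemma e_natmul (n : nat) (x : R) : e (n%:R * x) = e x ^+ n.
Proof.
elim: n => [|n IH]; first by rewrite mul0r e0 expr0.
by rewrite -addn1 natrD mulrDl mul1r eD IH exprD expr1.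
Qed.

Lemma e_ne1 (q : nat) (j : int) : (0 < j)%R -> (j < q%:Z)%R ->
  e (j%:~R / q%:R : R) != 1.
Proof.
move=> j0 jq; apply/eqP; rewrite /e => -[+ _].
have q0 : (0 : R) < q%:R by rewrite ltr0n -(ltz_nat 0); exact: lt_trans j0 jq.
set y := pi * (j%:~R / q%:R) : R.
have -> : 2 * pi * (j%:~R / q%:R) = y *+ 2 by rewrite /y -mulr_natr; ring.
rewrite cos_mulr2n => h.
have hc : cos y ^+ 2 = 1 by move: h; lra.
have : sin y ^+ 2 = 0 by rewrite sin2cos2 hc subrr.
move/eqP; rewrite expf_eq0 /= => /eqP hs.
have : 0 < sin y.
  apply: sin_gt0_pi; apply/andP; split.
    by rewrite /y mulr_gt0 ?pi_gt0 // divr_gt0 // ltr0z.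
  rewrite /y -{2}(mulr1 pi) ltr_pM2l ?pi_gt0 // ltr_pdivrMr // mul1r.
  by rewrite -(ltr_int R) in jq.
by rewrite hs ltxx.
Qed.

Lemma e_nq (q : nat) (n c : int) : (n * c)%:~R / q%:R = n%:~R * (c%:~R / q%:R) :> R.
Proof. by rewrite intrM mulrA. Qed.

Lemma geom (q : nat) (c : int) : (0 < q)%N ->
  \sum_(n < q) e ((n%:Z * c)%:~R / q%:R : R) = if (q%:Z %| c)%Z then q%:R else 0.
Proof.
move=> q0.
have qR : (q%:R : R) != 0 by rewrite pnatr_eq0 -lt0n.
have qZ : (q%:Z) != 0 by rewrite eqz_nat -lt0n.
set w := e (c%:~R / q%:R : R).
have ht : forall n : 'I_q, e ((n%:Z * c)%:~R / q%:R : R) = w ^+ n.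
  by move=> n; rewrite e_nq -[(n%:Z)%:~R]/(n%:R : R) e_natmul.
rewrite (eq_bigr _ (fun n _ => ht n)).
case: ifP => hd.
  have -> : w = 1.
    rewrite /w; case/dvdzP: hd => t ->; rewrite intrM -[(q%:Z)%:~R]/(q%:R : R) mulfK //.
    exact: e_int.
  by rewrite (eq_bigr (fun _ => 1)) ?sumr_const ?card_ord // => i _; rewrite expr1n.
have hwq : w ^+ q = 1.
  by rewrite /w -e_natmul mulrC divfK // e_int.
have hw1 : w != 1.
  have j0 : (c %% q)%Z != 0 by apply/eqP => /dvdz_mod0P; rewrite hd.
  have -> : w = e (((c %% q)%Z)%:~R / q%:R).
    rewrite /w {1}(divz_eq c q) intrD mulrDl eD intrM -[(q%:Z)%:~R]/(q%:R : R).
    by rewrite mulfK // e_int mul1r.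
  apply: e_ne1; first by rewrite lt_def j0 modz_ge0.
  by have := ltz_mod c qZ.
have := subrX1 w q; rewrite hwq subrr => /esym/eqP; rewrite mulf_eq0 subr_eq0 (negbTE hw1) /=.
by move/eqP.
Qed.
End E.

Lemma termL (R : realType) (q : nat) (a b g p1 p2 p3 p4 k l n m : int) :
  e ((n * (- p4 * k + p2 * l) + m * (p3 * k - p1 * l))%:~R / q%:R : R)
  * conjc (phi R q a b g n m)
  * phi R q a b g (n + (p2 * k + p4 * l)) (m + (- p1 * k - p3 * l))
  = e ((a * (p2 * k + p4 * l) ^+ 2 + b * (p2 * k + p4 * l) * (- p1 * k - p3 * l)
        + g * (- p1 * k - p3 * l) ^+ 2)%:~R / q%:R)
    * e ((n * ((- p4 + 2 * a * p2 - b * p1) * k + (p2 + 2 * a * p4 - b * p3) * l))%:~R / q%:R)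
    * e ((m * ((p3 - 2 * g * p1 + b * p2) * k + (- p1 - 2 * g * p3 + b * p4) * l))%:~R / q%:R).
Proof.
rewrite /phi eN -!eD -!mulNr -!intrN -!mulrDl -!intrD; congr (e (_%:~R / _)); ring.
Qed.

Lemma summ (R : realType) (q : nat) (C : R[i]) (f g : 'I_q -> R[i]) :
  \sum_(n < q) \sum_(m < q) C * f n * g m = C * (\sum_(n < q) f n) * (\sum_(m < q) g m).
Proof.
rewrite (mulr_sumr _ _ _ C) mulr_suml; apply: eq_bigr => n _; by rewrite mulr_sumr.
Qed.

Theorem mainTheorem6 (R : realType) (p : int) (q : nat)
  (p1 p2 p3 p4 a b g : int)
  (hp1 : 1 <= p) (hq1 : (1 <= q)%N) (hpq : coprimez p q%:Z)
  (hp : p = p1 ^+ 2 + p2 ^+ 2 + p3 ^+ 2 + p4 ^+ 2)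
  (h1 : 0 <= p1) (h2 : 0 <= p2) (h3 : 0 <= p3) (h4 : 0 <= p4)
  (hDelta : let r1 := - p1 - 2 * g * p3 + b * p4 in
            let r2 := p2 + 2 * a * p4 - b * p3 in
            let r3 := p3 - 2 * g * p1 + b * p2 in
            let r4 := - p4 + 2 * a * p2 - b * p1 in
            coprimez (r1 * r4 - r2 * r3) q%:Z)
  (k l : int) :
  Ssum R q a b g p1 p2 p3 p4 k l =
    (if (q%:Z %| k)%Z && (q%:Z %| l)%Z then ((q ^ 2)%N)%:R else 0).
Proof.
rewrite /Ssum; cbv zeta.
under eq_bigr => n _ do under eq_bigr => m _ do rewrite termL.
rewrite summ.
rewrite !geom //.
cbv zeta in hDelta.
set r1 := - p1 - 2 * g * p3 + b * p4 in hDelta *.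
set r2 := p2 + 2 * a * p4 - b * p3 in hDelta *.
set r3 := p3 - 2 * g * p1 + b * p2 in hDelta *.
set r4 := - p4 + 2 * a * p2 - b * p1 in hDelta *.
have hc : coprimez q (r1 * r4 - r2 * r3) by rewrite coprimez_sym.
have key : ((q%:Z %| r4 * k + r2 * l)%Z && (q%:Z %| r3 * k + r1 * l)%Z)
         = ((q%:Z %| k)%Z && (q%:Z %| l)%Z).
  apply/idP/idP => /andP [hA hB]; apply/andP; split.
  - rewrite -(Gauss_dvdzr _ hc).
    have -> : (r1 * r4 - r2 * r3) * k = r1 * (r4 * k + r2 * l) - r2 * (r3 * k + r1 * l) by ring.
    by rewrite rpredB // dvdz_mull.
  - rewrite -(Gauss_dvdzr _ hc).
    have -> : (r1 * r4 - r2 * r3) * l = r4 * (r3 * k + r1 * l) - r3 * (r4 * k + r2 * l) by ring.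
    by rewrite rpredB // dvdz_mull.
  - by rewrite rpredD // dvdz_mull.
  - by rewrite rpredD // dvdz_mull.
rewrite -key.
case hA : (q%:Z %| r4 * k + r2 * l)%Z; case hB : (q%:Z %| r3 * k + r1 * l)%Z;
  rewrite /= ?mulr0 ?mul0r //.
have : (q%:Z %| k)%Z && (q%:Z %| l)%Z by rewrite -key hA hB.
case/andP => /dvdzP [k0 hk] /dvdzP [l0 hl].
have qR : (q%:R : R) != 0 by rewrite pnatr_eq0 -lt0n.
set Q := (X in e (X%:~R / _)).
have -> : Q = (a * (p2 * k0 + p4 * l0) ^+ 2 + b * (p2 * k0 + p4 * l0) * (- p1 * k0 - p3 * l0)
        + g * (- p1 * k0 - p3 * l0) ^+ 2) * q%:Z * q%:Z by rewrite /Q hk hl; ring.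
rewrite intrM -[(q%:Z)%:~R]/(q%:R : R) mulfK // e_int mul1r.
by rewrite -natrM mulnn.
Qed.
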